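(* Let $\delta\in(0,1)$, $D\ge1$ and $q\ge2$ be constants, let $q_c$ be an integer with $1\le q_c\le q$, and let $\alpha=\frac{\delta}{100D\log q}$. Define $g_\alpha(k)=\sum_{i=0}^{k-1}q_c^{\alpha i}$. Let $\mathcal F$ be any family of probability distributions $\nu$, each supported on subsets of a set $U_\nu$ with $|U_\nu|\le D$ and satisfying $\mathbb E_{S\sim\nu}[|S|]\le1-\delta$. Then $$\beta(\alpha):=\sup_{\nu\in\mathcal F}\sum_{S}\nu(S)^{1-\alpha}g_\alpha(|S|)<1.$$
   Context: $\log$ is the natural logarithm. (In the paper, $\mathcal F$ is the set of distributions $\nu$ of the set $S$ sampled in the invocations of an abstract marginal sampler whose continuation sets have size at most $q_c$, under the hypotheses $\mathbb E_\nu|S|\le1-\delta$ and $|\bigcup_{S\in\mathrm{supp}\nu}S|\le D$.) *)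

(* Defs.v *)
From mathcomp Require Import all_boot all_order all_algebra.
From mathcomp Require Import all_classical all_reals all_analysis.
Set Implicit Arguments. Unset Strict Implicit. Unset Printing Implicit Defensive.
Import Order.TTheory GRing.Theory Num.Theory.
Local Open Scope ring_scope.

Definition alpha_of {R : realType} (delta D q : R) : R :=
  delta / (100 * D * ln q).

Definition g_alpha {R : realType} (qc : nat) (alpha : R) (k : nat) : R :=
  \sum_(0 <= i < k) powR (qc%:R) (alpha * i%:R).

Definition is_distr {R : realType} (U : finType) (nu : {set U} -> R) : Prop :=
  (forall S, 0 <= nu S) /\ \sum_(S : {set U}) nu S = 1.

Definition exp_size {R : realType} (U : finType) (nu : {set U} -> R) : R :=
  \sum_(S : {set U}) nu S * (#|S|)%:R.

Definition beta_sum {R : realType} (qc : nat) (alpha : R)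
    (U : finType) (nu : {set U} -> R) : R :=
  \sum_(S : {set U}) powR (nu S) (1 - alpha) * g_alpha qc alpha #|S|.

(* Main.v *)
Require Import Defs.
From mathcomp Require Import all_boot all_order all_algebra.
From mathcomp Require Import all_classical all_reals all_analysis.
From mathcomp Require Import ring lra.
Import Order.TTheory GRing.Theory Num.Theory.
Local Open Scope ring_scope.

Lemma nat_aux n : (n * 2 ^ n <= 2 ^ (2 * n))%N.
Proof.
have h : (n <= 2 ^ n)%N by apply: ltnW; apply: ltn_expl.
have -> : (2 ^ (2 * n) = 2 ^ n * 2 ^ n)%N by rewrite -expnD addnn mul2n.
by apply: leq_mul.
Qed.

Lemma eqW' (R : realType) (x y : R) : x = y -> x <= y.
Proof. by move=> ->. Qed.

Lemma young1 (R : realType) (y p : R) : 0 <= y -> 0 < p < 1 ->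
  powR y p <= p * y + (1 - p).
Proof.
move=> y0 /andP[p0 p1].
have p1' : 0 < 1 - p by rewrite subr_gt0.
have := @conjugate_powR R (powR y p) 1 p^-1 (1 - p)^-1 (powR_ge0 _ _) ler01.
rewrite !invr_gt0 p0 p1' !invrK addrC subrK => /(_ isT isT erefl).
by rewrite mulr1 -powRrM mulfV ?gt_eqF // powRr1 // powR1 mul1r mulrC.
Qed.

Lemma young2 (R : realType) (x N p : R) : 0 <= x -> 0 < N -> 0 < p < 1 ->
  powR x p <= powR N (- p) * (p * N * x + (1 - p)).
Proof.
move=> x0 N0 pp.
have := @young1 R _ _ (mulr_ge0 (ltW N0) x0) pp.
have hN : 0 < powR N p by apply: powR_gt0.
rewrite powRM ?(ltW N0) // => h.
rewrite powRN -(ler_pM2l hN) mulrA mulfV ?gt_eqF // mul1r.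
by rewrite -mulrA.
Qed.

Lemma gbound (R : realType) (qc : nat) (alpha q D : R) (k : nat) :
  (1 <= qc)%N -> qc%:R <= q -> 1 <= q -> 0 <= alpha -> k%:R <= D ->
  g_alpha qc alpha k <= k%:R * powR q (alpha * D).
Proof.
move=> qc1 qcq q1 a0 kD.
rewrite /g_alpha.
have -> : k%:R * powR q (alpha * D) = \sum_(0 <= i < k) powR q (alpha * D).
  by rewrite sumr_const_nat subn0 mulr_natl.
apply: ler_sum_nat => i /andP[_ ik].
apply: (@le_trans _ _ (powR q (alpha * i%:R))).
  apply: ge0_ler_powR => //; first by rewrite mulr_ge0.
  by rewrite nnegrE.
  by rewrite nnegrE (le_trans ler01).
apply: ler_powR => //; apply: ler_wpM2l => //.
apply: le_trans kD; rewrite ler_nat; exact: ltnW.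
Qed.

Theorem lemma4p5 (R : realType) (delta D q : R) (qc : nat) :
  0 < delta -> delta < 1 -> 1 <= D -> 2 <= q ->
  (1 <= qc)%N -> qc%:R <= q ->
  exists beta : R, beta < 1 /\
    forall (U : finType) (nu : {set U} -> R),
      (#|U|)%:R <= D -> is_distr nu -> exp_size nu <= 1 - delta ->
      beta_sum qc (alpha_of delta D q) nu <= beta.
Proof.
move=> d0 d1 D1 q2 qc1 qcq.
set a := alpha_of delta D q.
have q1 : 1 < q by lra.
have lnq0 : 0 < ln q by apply: ln_gt0.
have e50 : expR (1/50 : R) <= 2.
  have := expR_ge1Dx (- (1/50 : R)); rewrite expRN => h.
  have he : 0 < expR (1/50 : R) by apply: expR_gt0.
  have hi : expR (1/50 : R) * (expR (1/50 : R))^-1 = 1 by rewrite mulfV ?gt_eqF.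
  have : expR (1/50 : R) * (49/50) <= 1.
    by rewrite -[X in _ <= X]hi; apply: ler_wpM2l; lra.
  lra.
have lnq50 : 1/50 <= ln q.
  rewrite -ler_expR lnK ?posrE; last lra.
  lra.
have aD : a * ln q * D = delta / 100.
  rewrite /a /alpha_of; field; rewrite !gt_eqF //; lra.
have a0 : 0 < a.
  rewrite /a /alpha_of divr_gt0 // !mulr_gt0 //; lra.
have ah : a <= 1/2.
  have h1 : a * (1/50) <= a * ln q by apply: ler_wpM2l; lra.
  have h2 : (a * ln q) * 1 <= a * ln q * D by apply: ler_wpM2l => //; apply: mulr_ge0; lra.
  rewrite mulr1 in h2.
  lra.
set p := 1 - a.
have pp : 0 < p < 1 by apply/andP; split; rewrite /p; lra.
set D0 := (Num.trunc D).+1.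
have DD0 : D < D0%:R by apply: truncnS_gt.
have D0D : D0%:R <= D + 1.
  rewrite /D0 -addn1 natrD lerD2r truncn_le; lra.
set N : R := (D0 * 2 ^ D0)%:R.
have N1 : 1 <= N.
  rewrite /N (_ : 1 = 1%:R) // ler_nat muln_gt0 expn_gt0 //.
have N0 : 0 < N by lra.
set K := expR (delta / 100).
exists (K * powR N a * (1 - p * delta)); split.
  have Nn : (D0 * 2 ^ D0 <= 2 ^ (2 * D0))%N.
    exact: nat_aux.
  have Nq : N <= q ^+ (2 * D0).
    apply: (@le_trans _ _ ((2 : R) ^+ (2 * D0))).
      by rewrite /N -natrX ler_nat.
    apply: lerXn2r; rewrite ?nnegrE //; lra.
  have hNa : powR N a <= expR (4 * delta / 100).
    apply: (@le_trans _ _ (powR (q ^+ (2 * D0)) a)).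
      apply: ge0_ler_powR; rewrite ?nnegrE //; lra.
    rewrite -powR_mulrn; last lra.
    rewrite -powRrM /powR gt_eqF; last lra.
    rewrite ler_expR natrM.
    have t0 : 0 <= a * ln q by apply: mulr_ge0; lra.
    have -> : 2%:R * D0%:R * a * ln q = 2 * (D0%:R * (a * ln q)) by ring.
    have h1 : D0%:R * (a * ln q) <= (D + 1) * (a * ln q) by apply: ler_wpM2r.
    have h2 : (D + 1) * (a * ln q) <= (2 * D) * (a * ln q) by apply: ler_wpM2r => //; lra.
    have h3 : (2 * D) * (a * ln q) = 2 * (delta / 100) by rewrite -aD; ring.
    lra.
  have ad : a * delta <= 1/2 * delta by apply: ler_wpM2r; lra.
  have pdl : p * delta = delta - a * delta by rewrite /p; ring.
  have ad0 : 0 <= a * delta by apply: mulr_ge0; lra.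
  have pd : 0 < 1 - p * delta by lra.
  apply: (@le_lt_trans _ _ (K * expR (4 * delta / 100) * (1 - p * delta))).
    apply: ler_wpM2r; first lra.
    apply: ler_wpM2l => //; rewrite /K; exact: ltW (expR_gt0 _).
  rewrite /K -expRD.
  have := expR_ge1Dx (- (delta / 100 + 4 * delta / 100)).
  rewrite expRN => h.
  have he : 0 < expR (delta / 100 + 4 * delta / 100) by apply: expR_gt0.
  have hi : expR (delta / 100 + 4 * delta / 100) * (expR (delta / 100 + 4 * delta / 100))^-1 = 1 by rewrite mulfV ?gt_eqF.
  rewrite -[X in _ < X]hi; apply: (@lt_le_trans _ _ (expR (delta / 100 + 4 * delta / 100) * (1 - (delta / 100 + 4 * delta / 100)))).
    rewrite ltr_pM2l //; lra.
  by rewrite ler_pM2l.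
move=> U nu UD [nu0 nu1] Ed.
have UD0 : (#|U| <= D0)%N.
  apply: ltnW; rewrite -(ltr_nat R); exact: le_lt_trans UD DD0.
have hq0 : q != 0 by rewrite gt_eqF //; lra.
have Ka : powR q (a * D) = K.
  by rewrite /powR (negbTE hq0) /K -aD; congr expR; ring.
have gS : forall S : {set U}, g_alpha qc a #|S| <= #|S|%:R * K.
  move=> S; rewrite -Ka; apply: gbound => //; try lra.
  apply: le_trans UD; rewrite ler_nat; exact: max_card.
have sumS : \sum_(S : {set U}) (#|S|%:R : R) <= N.
  rewrite -natr_sum /N ler_nat.
  apply: (@leq_trans (\sum_(S : {set U}) D0)%N).
    by apply: leq_sum => S _; exact: leq_trans (max_card _) UD0.
  rewrite sum_nat_const -cardsT -powersetT card_powerset cardsT mulnC.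
  by rewrite leq_mul2l leq_exp2l // UD0 orbT.
set c := powR N (- p) * K.
have c0 : 0 <= c by apply: mulr_ge0; [exact: powR_ge0 | exact: ltW (expR_gt0 _)].
have K0 : 0 <= K by exact: ltW (expR_gt0 _).
have term : forall S : {set U}, powR (nu S) p * g_alpha qc a #|S| <=
    c * p * N * (nu S * #|S|%:R) + c * (1 - p) * #|S|%:R.
  move=> S.
  apply: (@le_trans _ _ (powR (nu S) p * (#|S|%:R * K))).
    by apply: ler_wpM2l; [exact: powR_ge0 | exact: gS].
  apply: (@le_trans _ _ ((powR N (- p) * (p * N * nu S + (1 - p))) * (#|S|%:R * K))).
    apply: ler_wpM2r; first by apply: mulr_ge0.
    exact: young2.
  rewrite /c; apply: eqW'; ring.
rewrite /beta_sum.
apply: le_trans (ler_sum _ (fun S _ => term S)) _.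
rewrite big_split /= -!mulr_sumr.
change (\sum_(S : {set U}) nu S * (#|S|)%:R) with (exp_size nu).
have cpN : 0 <= c * p * N by apply: mulr_ge0; [apply: mulr_ge0 => //; lra | lra].
have c1p : 0 <= c * (1 - p) by apply: mulr_ge0 => //; lra.
apply: le_trans (lerD (ler_wpM2l cpN Ed) (ler_wpM2l c1p sumS)) _.
have cN : c * N = K * powR N a.
  have e : - p + 1 = a by rewrite /p; lra.
  rewrite -e powRD; last by rewrite (gt_eqF N0) implybT.
  by rewrite powRr1 ?(ltW N0) // /c; ring.
apply: eqW'; rewrite -cN; ring.
Qed.
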